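(* Let $\vec k=(k_1,\dots,k_\ell)$ be a vector of positive integers and let $F$ be a tableau filled bijectively with the labels $1,2,\dots,|\vec k|+\ell$, with $\ell$ top-justified columns, the $i$-th column containing $k_i+1$ entries, such that the entries of the first row increase from left to right and each column increases from top to bottom. Then $F=\eta_*(\pi)$ for some $\pi\in\mathcal{D}_{\vec k}$ if and only if for every pair of entries $a,d$ with $d$ immediately below $a$ in $F$ and $a<d-1$, the set of labels $\{a+1,a+2,\dots,d-1\}$ is a union of entire columns of $F$.
   Context: $|\vec k|=k_1+\cdots+k_\ell$, $N=|\vec k|+\ell$. A $\vec k$-Dyck path is a word $\pi=\pi_1\cdots\pi_N$ containing the letters $S^{k_1},\dots,S^{k_\ell}$ exactly once each and in this order, together with $|\vec k|$ letters $W$, such that all starting ranks are nonnegative, where $r_1=0$, $r_{i+1}=r_i+k_j$ if $\pi_i=S^{k_j}$ and $r_{i+1}=r_i-1$ if $\pi_i=W$. $\mathcal D_{\vec k}$ is the set of such paths. Filling algorithm $\eta_*$: in a tableau of $\ell$ top-justified columns, column $i$ having $k_i+1$ cells, place $1$ at the top of column 1; for $i=2,\dots,N$, call an entry active if it is currently the bottom entry of a column $i'$ not yet containing $k_{i'}+1$ entries; if $\pi_i=W$ place $i$ immediately below the largest active entry, otherwise place $i$ at the top of the first empty column. The resulting tableau is $\eta_*(\pi)$. *)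

(* Defs.v *)
From mathcomp Require Import all_boot all_order all_algebra.
Set Implicit Arguments. Unset Strict Implicit. Unset Printing Implicit Defensive.
Import GRing.Theory Num.Theory.

(* Letters of a k-Dyck path: [None] is W, [Some j] is S^{k_{j+1}}
   (column index j is 0-based). *)
Definition letter := option nat.

Definition kstep (k : seq nat) (x : letter) : int :=
  match x with None => (-1)%R | Some j => ((nth 0 k j)%:Z)%R end.

Definition rank (k : seq nat) (w : seq letter) : int :=
  (\sum_(x <- w) kstep k x)%R.

Definition dyck (k : seq nat) (p : seq letter) : Prop :=
  [/\ pmap id p = iota 0 (size k),            (* S^{k_1},...,S^{k_l} once each, in order *)
      count (pred1 None) p = sumn k
    & forall i, i < size p -> (0 <= rank k (take i p))%R ].

(* ---- the filling algorithm eta_* ----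
   A tableau is a list of columns, each column listed top to bottom. *)
Definition is_active (kc : nat * seq nat) : bool :=
  (0 < size kc.2) && (size kc.2 < kc.1.+1).

Definition actives (k : seq nat) (cols : seq (seq nat)) : seq nat :=
  [seq last 0 kc.2 | kc <- zip k cols & is_active kc].

Definition place_top (i : nat) (cols : seq (seq nat)) : option (seq (seq nat)) :=
  let j := find (fun c => c == [::]) cols in
  if j < size cols then Some (set_nth [::] cols j [:: i]) else None.

Definition place_below (k : seq nat) (i : nat) (cols : seq (seq nat))
  : option (seq (seq nat)) :=
  let A := actives k cols in
  if A is [::] then None else
  let m := \max_(x <- A) x in
  let j := find (fun kc => is_active kc && (last 0 kc.2 == m)) (zip k cols) in
  Some (set_nth [::] cols j (rcons (nth [::] cols j) i)).

Fixpoint run (k : seq nat) (w : seq letter) (i : nat) (cols : seq (seq nat))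
  : option (seq (seq nat)) :=
  match w with
  | [::] => Some cols
  | x :: w' =>
      match (if x is None then place_below k i cols else place_top i cols) with
      | Some cols' => run k w' i.+1 cols'
      | None => None
      end
  end.

(* eta_* (pi): [None] if the algorithm gets stuck. Label 1 goes to the top of
   column 1 (the first empty column of the initially empty tableau). *)
Definition eta (k : seq nat) (p : seq letter) : option (seq (seq nat)) :=
  let cols0 := nseq (size k) [::] in
  match p with
  | [::] => Some cols0
  | _ :: w => match place_top 1 cols0 with
              | Some c => run k w 2 c
              | None => None
              end
  end.

Definition is_tableau (k : seq nat) (F : seq (seq nat)) : Prop :=
  [/\ size F = size k,
      forall i, i < size k -> size (nth [::] F i) = (nth 0 k i).+1,
      perm_eq (flatten F) (iota 1 (sumn k + size k)),
      sorted ltn (map (head 0) F)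
    & all (sorted ltn) F].

Definition gap_condition (F : seq (seq nat)) : Prop :=
  forall c, c \in F -> forall r, r.+1 < size c ->
    let a := nth 0 c r in let d := nth 0 c r.+1 in
    a < d.-1 ->
    exists cols : seq (seq nat),
      {subset cols <= F} /\
      forall x, (a < x < d) = has (fun c' => x \in c') cols.

(* Main.v *)
Require Import Defs.
From mathcomp Require Import all_boot all_order all_algebra.
From mathcomp Require Import zify.
Set Implicit Arguments. Unset Strict Implicit. Unset Printing Implicit Defensive.

Definition restrict (G : seq (seq nat)) (i : nat) := map (filter (fun x => x < i)) G.

Definition step (k : seq nat) (x : letter) (d : nat) cols :=
  if x is None then place_below k d cols else place_top d cols.

Lemma max_mem (A : seq nat) : A != [::] -> \max_(x <- A) x \in A.
Proof.
elim: A => // a A IH _; rewrite big_cons inE.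
case: A IH => [|b A] IH; first by rewrite big_nil maxn0 eqxx.
have := IH isT; rewrite /maxn; case: ifP => _ h; by rewrite ?h ?orbT ?eqxx.
Qed.

Lemma step_shape k x i cols c' : step k x i cols = Some c' ->
  exists j, j < size cols /\ c' = set_nth [::] cols j (rcons (nth [::] cols j) i).
Proof.
case: x => [a|] /=.
  rewrite /place_top; case: ifP => // hj [<-]; exists (find (fun c => c == [::]) cols); split => //.
  have := @nth_find _ [::] (fun c : seq nat => c == [::]) cols; rewrite has_find hj => /(_ isT) /eqP ->.
  by [].
rewrite /place_below; case E: (actives k cols) => [|a A] // [<-].
set m := \max_(x <- _) x; set P := (fun kc : nat * seq nat => _).
set j := find P _; exists j; split => //.
have hm : m \in actives k cols by rewrite /m -E; apply: max_mem; rewrite E.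
have : has P (zip k cols).
  move: hm; rewrite /actives => /mapP [kc]; rewrite mem_filter => /andP [ha hkc] hmk.
  by apply/hasP; exists kc => //; rewrite /P ha -hmk eqxx.
rewrite has_find => h; apply: (leq_trans h); rewrite size_zip; exact: geq_minr.
Qed.

Lemma filter_lt_id i (s : seq nat) : all (fun x => x < i) s -> filter (fun x => x < i) s = s.
Proof. by move/all_filterP. Qed.

Lemma run_inv k w i cols G : run k w i cols = Some G ->
  all (all (fun x => x < i)) cols ->
  [/\ cols = restrict G i, all (all (fun x => x < i + size w)) G &
    forall d, i <= d < i + size w ->
      step k (nth None w (d - i)) d (restrict G d) = Some (restrict G d.+1)].
Proof.
elim: w i cols => [|x w IH] i cols /=.
  move=> [<-] hc; split => //; last by move=> d; lia.
    rewrite /restrict -[LHS]map_id; apply/eq_in_map => c hcin.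
    by rewrite filter_lt_id //; move/allP: hc => /(_ c hcin).
  by rewrite addn0.
case E: (if x is None then _ else _) => [c'|] //.
have Es : step k x i cols = Some c' by [].
move=> hrun hc.
have [j [hj hc']] := step_shape Es.
have hc2 : all (all (fun y => y < i.+1)) c'.
  rewrite hc'; apply/allP => c /(nthP [::]) [t]; rewrite size_set_nth nth_set_nth /=.
  move=> ht <-; case: eqP => _.
    rewrite all_rcons ltnSn /=; apply/allP => y hy; apply: ltnW.
    have : nth [::] cols j \in cols by apply: mem_nth.
    by move/(allP hc)/allP/(_ y hy).
  have : t < size cols by move: ht; rewrite /maxn; case: ifP => //; lia.
  move=> ht'; apply/allP => y hy; apply: ltnW.
  by move: (mem_nth [::] ht') => /(allP hc)/allP/(_ y hy).
have [IH1 IH2 IH3] := IH _ _ hrun hc2.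
have H1 : cols = restrict G i.
  have -> : restrict G i = map (filter (fun x => x < i)) (restrict G i.+1).
    rewrite /restrict -map_comp; apply: eq_map => c /=; rewrite -filter_predI.
    by apply: eq_filter => y /=; case: (ltnP y i) => h //=; rewrite ltnS ltnW.
  rewrite -IH1 hc'; apply: (@eq_from_nth _ [::]).
    by rewrite size_map size_set_nth; apply/esym/maxn_idPr.
  move=> t ht; rewrite (nth_map [::]); last by rewrite size_set_nth; apply/(leq_trans ht)/leq_maxr.
  rewrite nth_set_nth /=; case: eqP => [->|_].
    rewrite filter_rcons ltnn filter_lt_id //.
    by move: (mem_nth [::] hj) => /(allP hc).
  by rewrite filter_lt_id //; move: (mem_nth [::] ht) => /(allP hc).
split => //.
- by rewrite addnS -addSn.
- move=> d hd; case: (ltngtP d i) => hdi; first by lia.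
    by have := IH3 d; rewrite subnS (_ : d - i = (d - i.+1).+1) /=; [apply; lia | lia].
  by rewrite hdi subnn /= -H1 -IH1.
Qed.

Lemma run_build k w i G :
  (forall d, i <= d < i + size w ->
     step k (nth None w (d - i)) d (restrict G d) = Some (restrict G d.+1)) ->
  run k w i (restrict G i) = Some (restrict G (i + size w)).
Proof.
elim: w i => [|x w IH] i /= h; first by rewrite addn0.
have := h i; rewrite leqnn subnn /= => /(_ ltac:(lia)).
rewrite /step => ->; rewrite -addSnnS; apply: IH => d hd.
by have := h d; rewrite (_ : d - i = (d - i.+1).+1) /=; [apply; lia | lia].
Qed.

Lemma sorted_lt_nth (s : seq nat) i j : sorted ltn s -> i < j -> j < size s ->
  nth 0 s i < nth 0 s j.
Proof.
move=> hs hij hj; apply: (sorted_ltn_nth ltn_trans) => //; rewrite inE //.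
exact: ltn_trans hj.
Qed.

Lemma sorted_le_nth (s : seq nat) i j : sorted ltn s -> i <= j -> j < size s ->
  nth 0 s i <= nth 0 s j.
Proof.
move=> hs; rewrite leq_eqVlt => /orP [/eqP -> //|hij] hj.
exact/ltnW/sorted_lt_nth.
Qed.

Lemma adjacent (s : seq nat) r y : sorted ltn s -> r.+1 < size s -> y \in s ->
  (y <= nth 0 s r) || (nth 0 s r.+1 <= y).
Proof.
move=> hs hr /(nthP 0) [t ht <-].
case: (leqP t r) => h; [apply/orP; left | apply/orP; right]; apply: sorted_le_nth => //.
exact: ltnW.
Qed.

Lemma head_le (s : seq nat) y : sorted ltn s -> y \in s -> head 0 s <= y.
Proof.
move=> hs /(nthP 0) [t ht <-]; rewrite -nth0; apply: sorted_le_nth => //.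
Qed.

Lemma le_last (s : seq nat) y : sorted ltn s -> y \in s -> y <= last 0 s.
Proof.
move=> hs /(nthP 0) [t ht <-]; rewrite (last_nth 0).
case: s hs ht => //= a s hs ht; apply: (@sorted_le_nth (a :: s)) => //=; lia.
Qed.

Lemma last_filter_adj (s : seq nat) r : sorted ltn s -> r.+1 < size s ->
  last 0 (filter (fun x => x < nth 0 s r.+1) s) = nth 0 s r.
Proof.
move=> hs hr; set f := filter _ s.
have ha : nth 0 s r \in f by rewrite mem_filter sorted_lt_nth // mem_nth // ltnW.
have hf : sorted ltn f by apply: sorted_filter => //; exact: ltn_trans.
apply/eqP; rewrite eqn_leq le_last // andbT.
have : last 0 f \in f by case: f ha {hf} => // b f _; rewrite (@mem_last _ b f).
rewrite mem_filter => /andP [hl hin].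
by have := adjacent hs hr hin; rewrite [_ <= last 0 f]leqNgt hl orbF.
Qed.

Lemma filter_rcons_sorted (s : seq nat) d : sorted ltn s -> d \in s ->
  filter (fun x => x < d.+1) s = rcons (filter (fun x => x < d) s) d.
Proof.
elim: s => // a s IH hs; rewrite inE => hd /=.
have hall : all (fun y => a < y) s by exact: (order_path_min ltn_trans hs).
have hs' : sorted ltn s by apply: (path_sorted hs).
case: eqP hd => [-> _|hne /= hd].
  rewrite ltnSn ltnn.
  have e1 : filter (fun x => x < a.+1) s = [::].
    rewrite -(filter_pred0 s); apply: eq_in_filter => y hy; move/allP: hall => /(_ y hy) /=; lia.
  have e2 : filter (fun x => x < a) s = [::].
    rewrite -(filter_pred0 s); apply: eq_in_filter => y hy; move/allP: hall => /(_ y hy) /=; lia.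
  by rewrite e1 e2.
have had : a < d by move/allP: hall => /(_ d hd).
by rewrite had ltnW //= IH.
Qed.

Lemma filter_notin (s : seq nat) d : d \notin s ->
  filter (fun x => x < d.+1) s = filter (fun x => x < d) s.
Proof.
move=> hd; apply: eq_in_filter => y hy; rewrite ltnS leq_eqVlt.
by case: eqP => // e; rewrite -e hy in hd.
Qed.

Lemma find_eq T (P : pred T) s j x0 : j < size s -> P (nth x0 s j) ->
  (forall i, i < j -> ~~ P (nth x0 s i)) -> find P s = j.
Proof.
move=> hj hP hb; have hh : has P s by apply/(has_nthP x0); exists j.
have := hh; rewrite has_find => hf.
case: (ltngtP (find P s) j) => // h.
  by have := hb _ h; rewrite nth_find.
by have := before_find x0 h; rewrite hP.
Qed.

Lemma uniq_flatten_nth (ss : seq (seq nat)) i j x : uniq (flatten ss) ->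
  x \in nth [::] ss i -> x \in nth [::] ss j -> i = j.
Proof.
elim: ss i j => [|s ss IH] [|i] [|j] //=; rewrite ?nth_nil // cat_uniq => /and3P [_ hd hu].
- move=> hx hx'; case/hasP: hd; exists x => //; apply/flattenP.
  by exists (nth [::] ss j) => //; apply: mem_nth; case: (ltnP j (size ss)) => // h; rewrite nth_default in hx'.
- move=> hx' hx; case/hasP: hd; exists x => //; apply/flattenP.
  by exists (nth [::] ss i) => //; apply: mem_nth; case: (ltnP i (size ss)) => // h; rewrite nth_default in hx'.
- by move=> h1 h2; congr _.+1; exact: IH h1 h2.
Qed.

Definition condA (F : seq (seq nat)) := forall j r j' b e,
  r.+1 < size (nth [::] F j) -> b \in nth [::] F j' -> e \in nth [::] F j' ->
  nth 0 (nth [::] F j) r < b -> b < nth 0 (nth [::] F j) r.+1 ->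
  nth 0 (nth [::] F j) r.+1 <= e -> False.

Lemma discrete_ivt (f : nat -> nat) a i n : f i < a -> a < f (i + n.+1) ->
  (forall t, f t != a) -> exists2 t, i <= t < i + n.+1 & f t < a < f t.+1.
Proof.
move=> hi; elim: n => [|n IH] hn hne.
  by exists i; [lia | rewrite hi addn1 in hn *].
case: (ltngtP (f (i + n.+1)) a) => h.
- by exists (i + n.+1); [lia | rewrite h -addnS].
- by have [t ht ht'] := IH h hne; exists t => //; lia.
- by have := hne (i + n.+1); rewrite h eqxx.
Qed.

Section Tab.
Variables (k : seq nat) (F : seq (seq nat)).
Hypothesis HsF : size F = size k.
Hypothesis Hsz : forall i, i < size k -> size (nth [::] F i) = (nth 0 k i).+1.
Hypothesis Hperm : perm_eq (flatten F) (iota 1 (sumn k + size k)).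
Hypothesis Hhead : sorted ltn (map (head 0) F).
Hypothesis Hcol : all (sorted ltn) F.

Local Notation N := (sumn k + size k).
Local Notation col j := (nth [::] F j).

Lemma memF x : (x \in flatten F) = (0 < x <= N).
Proof. by rewrite (perm_mem Hperm) mem_iota add1n ltnS. Qed.

Lemma uniqF : uniq (flatten F).
Proof. by rewrite (perm_uniq Hperm) iota_uniq. Qed.

Lemma lt_size_of_mem j x : x \in col j -> j < size F.
Proof. by case: (ltnP j (size F)) => // h; rewrite nth_default. Qed.

Lemma colS j : sorted ltn (col j).
Proof.
case: (ltnP j (size F)) => h; last by rewrite nth_default.
by move/allP: Hcol; apply; apply: mem_nth.
Qed.

Lemma col_unique i j x : x \in col i -> x \in col j -> i = j.
Proof. exact: uniq_flatten_nth uniqF. Qed.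

Lemma col_flat j x : x \in col j -> x \in flatten F.
Proof.
move=> hx; apply/flattenP; exists (col j) => //; apply: mem_nth.
exact: lt_size_of_mem hx.
Qed.

Lemma in_col x : x \in flatten F -> exists2 j, j < size F & x \in col j.
Proof.
by move/flattenP => [c /(nthP [::]) [j hj <-] hx]; exists j.
Qed.

Lemma col_size j : j < size F -> size (col j) = (nth 0 k j).+1.
Proof. by move=> h; apply: Hsz; rewrite -HsF. Qed.

Lemma gap_condA : gap_condition F <-> condA F.
Proof.
split.
- move=> hg j r j' b e hr hb he hab hbd hde.
  have hj : j < size F by case: (ltnP j (size F)) hr => // h; rewrite nth_default.
  have := hg (col j) (mem_nth [::] hj) r hr; rewrite /=.
  set a := nth 0 (col j) r; set d := nth 0 (col j) r.+1.
  move=> /(_ ltac:(lia)) [cols [hsub heq]].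
  have := heq b; rewrite hab hbd /= => /esym /hasP [c hc hbc].
  have := hsub c hc => /(nthP [::]) [j'' hj'' ec].
  rewrite -ec in hbc; have ej := col_unique hbc hb; subst j''.
  have : has (fun c' => e \in c') cols by apply/hasP; exists c => //; rewrite -ec.
  by rewrite -heq /a /d; lia.
- move=> hA c /(nthP [::]) [jc hjc <-] r hr /=.
  set a := nth 0 (col jc) r; set d := nth 0 (col jc) r.+1 => had.
  have hda : d \in flatten F by apply: (col_flat (j := jc)); rewrite /d; apply: mem_nth.
  have haa : a \in flatten F by apply: (col_flat (j := jc)); rewrite /a; apply: mem_nth; exact: ltnW.
  exists [seq c' <- F | has (fun x => a < x < d) c']; split.
    by move=> c'; rewrite mem_filter => /andP [].
  move=> x; apply/idP/idP.
    move=> hx; have : x \in flatten F by rewrite memF; rewrite memF in hda haa; lia.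
    move/flattenP => [c' hc' hxc']; apply/hasP; exists c' => //.
    by rewrite mem_filter hc' andbT; apply/hasP; exists x.
  move/hasP => [c']; rewrite mem_filter => /andP [/hasP [y hyc hy] /(nthP [::]) [j' hj' ec]] hxc.
  rewrite -ec in hyc hxc.
  have hsj := colS jc; have hsj' := colS j'.
  have ha' : a \notin col j'.
    apply/negP => ha; have ej := col_unique ha (mem_nth 0 (ltnW hr)); subst j'.
    by have := adjacent hsj hr hyc; rewrite -/a -/d; lia.
  case: (ltnP a x) => hax; case: (ltnP x d) => hxd; rewrite ?hax ?hxd //.
  + by exfalso; apply: (hA jc r j' y x hr hyc hxc); lia.
  + exfalso.
    have hxa : x < a by rewrite ltn_neqAle hax andbT; apply/negP => /eqP e; rewrite -e hxc in ha'.
    move: hxc hyc => /(nthP 0) [i hi ei] /(nthP 0) [i2 hi2 ei2].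
    have hii2 : i < i2.
      case: (ltnP i i2) => // h; have := sorted_le_nth hsj' h hi; rewrite ei ei2; lia.
    have h1 : nth 0 (col j') i < a by rewrite ei.
    have h2 : a < nth 0 (col j') (i + (i2 - i).-1.+1).
      by rewrite (_ : i + (i2 - i).-1.+1 = i2) ?ei2; [case/andP: hy | lia].
    have h3 : forall t, nth 0 (col j') t != a.
      move=> t; apply/negP => /eqP e; move: ha'; rewrite -e.
      case: (ltnP t (size (col j'))) => htt; first by rewrite mem_nth.
      by rewrite nth_default // in e; move: hxa; rewrite -e.
    have [t ht ht'] := @discrete_ivt (nth 0 (col j')) a i (i2 - i).-1 h1 h2 h3.
    have htsz : t.+1 < size (col j') by apply: leq_ltn_trans hi2; lia.
    have htt : t.+1 <= i2 by lia.
    have hq := sorted_le_nth hsj' htt hi2; rewrite ei2 in hq.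
    case/andP: ht' => hp1 hp2; case/andP: hy => hy1 hy2.
    apply: (hA j' t jc a d htsz (mem_nth 0 (ltnW hr)) (mem_nth 0 hr)) => //.
    exact: ltnW (leq_ltn_trans hq hy2).
  + by exfalso; move: had hax hxd; rewrite /a /d; lia.
Qed.

Lemma size_restrict d : size (restrict F d) = size k.
Proof. by rewrite size_map HsF. Qed.

Lemma nth_restrict d j : nth [::] (restrict F d) j = filter (fun x => x < d) (col j).
Proof.
case: (ltnP j (size F)) => h; first by rewrite (nth_map [::]).
by rewrite !nth_default // size_map.
Qed.

Lemma nth_zip_restrict d j : nth (0, [::]) (zip k (restrict F d)) j =
  (nth 0 k j, filter (fun x => x < d) (col j)).
Proof. by rewrite nth_zip ?size_restrict // nth_restrict. Qed.

Lemma size_filter_lt (T : eqType) (p : pred T) s y : y \in s -> ~~ p y ->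
  size (filter p s) < size s.
Proof.
move=> hy hp; rewrite size_filter -(count_predC p s) -{1}(addn0 (count p s)) ltn_add2l.
by rewrite -has_count; apply/hasP; exists y.
Qed.

Lemma mem_actives d j : j < size F ->
  0 < size (filter (fun x => x < d) (col j)) ->
  size (filter (fun x => x < d) (col j)) < size (col j) ->
  last 0 (filter (fun x => x < d) (col j)) \in actives k (restrict F d).
Proof.
move=> hj h1 h2; rewrite /actives.
apply: (map_f (fun kc : nat * seq nat => last 0 kc.2) (_ : (nth 0 k j, _) \in _)).
rewrite mem_filter /is_active /= h1 -col_size // h2 /=.
rewrite -nth_zip_restrict; apply: mem_nth; rewrite size_zip size_restrict minnn -HsF //.
Qed.

Lemma actives_mem d x : x \in actives k (restrict F d) ->
  exists2 j, j < size F & [/\ x = last 0 (filter (fun x => x < d) (col j)),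
    0 < size (filter (fun x => x < d) (col j)) &
    size (filter (fun x => x < d) (col j)) < size (col j)].
Proof.
rewrite /actives => /mapP [kc]; rewrite mem_filter => /andP [ha] /(nthP (0, [::])) [j hj ekc] ->.
rewrite size_zip size_restrict minnn in hj.
move: ha; rewrite -ekc nth_zip_restrict /is_active /= => /andP [h1 h2].
exists j; first by rewrite HsF.
by split => //; rewrite col_size // HsF.
Qed.

Lemma le_max (A : seq nat) x : x \in A -> x <= \max_(y <- A) y.
Proof. by move=> hx; apply: (leq_bigmax_seq x). Qed.

Lemma step_pair x j r : r.+1 < size (col j) ->
  step k x (nth 0 (col j) r.+1) (restrict F (nth 0 (col j) r.+1)) =
     Some (restrict F (nth 0 (col j) r.+1).+1) ->
  x = None /\ forall y, y \in actives k (restrict F (nth 0 (col j) r.+1)) -> y <= nth 0 (col j) r.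
Proof.
move=> hr; set d := nth 0 (col j) r.+1; set a := nth 0 (col j) r.
have hj : j < size F by case: (ltnP j (size F)) hr => // h; rewrite nth_default.
have hsj := colS j.
have had : a < d by apply: sorted_lt_nth.
have hdc : d \in col j by apply: mem_nth.
have hac : a \in col j by apply: mem_nth; exact: ltnW.
have key : forall j0 y, restrict F d.+1 = set_nth [::] (restrict F d) j0 y -> j = j0 /\
     filter (fun x => x < d.+1) (col j) = y.
  move=> j0 y e; have := congr1 (fun s => nth [::] s j) e.
  rewrite nth_set_nth /= !nth_restrict; case: eqP => [-> //|_] e2.
  have : d \in filter (fun x => x < d.+1) (col j) by rewrite mem_filter ltnSn.
  by rewrite e2 mem_filter ltnn.
case: x => [z|] /=.
  rewrite /place_top; case: ifP => // _ [/esym /key [_ e]].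
  have : a \in filter (fun x => x < d.+1) (col j) by rewrite mem_filter hac ltnW.
  by rewrite e inE => /eqP h; move: had; rewrite h ltnn.
rewrite /place_below; case E: (actives k _) => [|a0 A] //.
set m := \max_(x <- _) x; set P := (fun kc : nat * seq nat => _).
move=> [/esym /key [ej _]]; split => //.
have hm : m \in actives k (restrict F d) by rewrite /m -E; apply: max_mem; rewrite E.
have : has P (zip k (restrict F d)).
  move: hm; rewrite /actives => /mapP [kc]; rewrite mem_filter => /andP [ha hkc] hmk.
  by apply/hasP; exists kc => //; rewrite /P ha -hmk eqxx.
move/(nth_find (0, [::])); rewrite -ej nth_zip_restrict /P /= => /andP [_ /eqP hl].
rewrite last_filter_adj // in hl.
move=> y hy; rewrite /a hl; exact: le_max.
Qed.

Lemma eta_condA p : eta k p = Some F -> condA F.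
Proof.
move=> he j r j' b e hr hb he' hab hbd hde.
case: p he => [|x0 w] he.
  by move: he hr => /= [<-]; rewrite nth_nseq; case: ifP.
have hrun : run k (Some 0 :: w) 1 (nseq (size k) [::]) = Some F by [].
have hnil : all (all (fun x => x < 1)) (nseq (size k) ([::] : seq nat)).
  by apply/allP => c; rewrite mem_nseq => /andP [_ /eqP ->].
have [_ hall hstep] := run_inv hrun hnil.
set d := nth 0 (col j) r.+1.
have hj : j < size F by case: (ltnP j (size F)) hr => // h; rewrite nth_default.
have hd : d < 1 + size (Some 0 :: w).
  by have := allP hall _ (mem_nth [::] hj) => /allP; apply; apply: mem_nth.
have h1d : 1 <= d by exact: (leq_ltn_trans (leq0n b) hbd).
have [_ hmax] := step_pair hr (hstep d ltac:(by rewrite h1d hd)).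
have hj' : j' < size F by apply: (lt_size_of_mem hb).
have hsj' := colS j'.
set s := filter (fun x => x < d) (col j').
have hbs : b \in s by rewrite mem_filter hbd hb.
have h0 : 0 < size s by case: (s) hbs.
have h2 : size s < size (col j') by apply: (size_filter_lt he'); rewrite -leqNgt.
have := hmax _ (mem_actives hj' h0 h2).
have : b <= last 0 s by apply: le_last => //; apply: sorted_filter => //; exact: ltn_trans.
by move=> hh1 hh2; move: (leq_trans hh1 hh2); rewrite leqNgt hab.
Qed.

Lemma not_all_filter (s : seq nat) (p : pred nat) : size (filter p s) < size s ->
  exists2 y, y \in s & ~~ p y.
Proof.
rewrite size_filter -(count_predC p s) -{1}(addn0 (count p s)) ltn_add2l -has_count.
by move/hasP.
Qed.

Lemma filter_nil (s : seq nat) (p : pred nat) : (forall y, y \in s -> ~~ p y) ->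
  filter p s = [::].
Proof.
move=> h; apply/eqP; rewrite -[_ == _]negbK -has_filter; apply/hasPn => y hy; exact: h.
Qed.

Lemma set_restrict d j : j < size F -> d \in col j ->
  set_nth [::] (restrict F d) j (rcons (filter (fun x => x < d) (col j)) d) = restrict F d.+1.
Proof.
move=> hj hd; apply: (@eq_from_nth _ [::]).
  by rewrite size_set_nth !size_restrict; apply/maxn_idPr; rewrite -HsF.
move=> i; rewrite size_set_nth size_restrict => hi.
rewrite nth_set_nth /= !nth_restrict; case: eqP => [->|ne].
  by rewrite filter_rcons_sorted // colS.
rewrite filter_notin //; apply/negP => hd'; apply: ne; exact: col_unique hd' hd.
Qed.

Local Notation H := (map (head 0) F).

Definition gl (x : nat) : letter := if x \in H then Some (index x H) else None.

Lemma col_nonempty j : j < size F -> 0 < size (col j).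
Proof. by move=> h; rewrite col_size. Qed.

Lemma head_in j : j < size F -> head 0 (col j) \in col j.
Proof. by move=> h; have := col_nonempty h; case: (col j) => //= x s _; rewrite inE eqxx. Qed.

Lemma step_ok : condA F -> forall d, 0 < d <= N ->
  step k (gl d) d (restrict F d) = Some (restrict F d.+1).
Proof.
move=> hA d hd.
have [jc hjc hdc] : exists2 j, j < size F & d \in col j by apply: in_col; rewrite memF.
rewrite /gl; case: ifP => hH /=.
- move: hH => /(nthP 0) [j]; rewrite size_map => hj; rewrite (nth_map [::]) // => ehd.
  have hdj : d \in col j by rewrite -ehd; apply: head_in.
  have e0 : filter (fun x => x < d) (col j) = [::].
    apply: filter_nil => y hy /=.
    by rewrite -leqNgt -ehd head_le // colS.
  rewrite /place_top (@find_eq _ _ _ j [::]); rewrite ?size_restrict -?HsF //.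
  + by rewrite hj -(set_restrict hj hdj) e0.
  + by rewrite nth_restrict e0.
  + move=> i hi; rewrite nth_restrict -has_filter; apply/hasP; exists (head 0 (col i)).
      by apply: head_in; exact: ltn_trans hj.
    rewrite -ehd; have := @sorted_lt_nth _ i j Hhead hi; rewrite size_map => /(_ hj).
    by rewrite !(nth_map [::]) //; exact: ltn_trans hj.
- have hsc := colS jc.
  move: hdc => /(nthP 0) [t ht etd].
  case: t ht etd => [|r] ht etd.
    by move: hH; rewrite -etd nth0; move/negP; case; apply: map_f; apply: mem_nth.
  set a := nth 0 (col jc) r.
  have hac : a \in col jc by apply: mem_nth; exact: ltn_trans ht.
  set s := filter (fun x => x < d) (col jc).
  have has : a \in s by rewrite mem_filter hac -etd sorted_lt_nth.
  have hs0 : 0 < size s by case: (s) has.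
  have hs1 : size s < size (col jc).
    by apply: (size_filter_lt (y := d)); [rewrite -etd mem_nth | rewrite ltnn].
  have hla : last 0 s = a by rewrite /s -etd last_filter_adj.
  have haA : a \in actives k (restrict F d) by rewrite -hla; apply: mem_actives.
  have hbound : forall y, y \in actives k (restrict F d) -> y <= a.
    move=> y /actives_mem [j' hj' [ey h1 h2]].
    have [e he hne] := not_all_filter h2; rewrite -leqNgt in hne.
    have hyin : y \in filter (fun x => x < d) (col j').
      by rewrite ey; case: (filter _ _) h1 => // z l _; rewrite (@mem_last _ z l).
    move: hyin; rewrite mem_filter => /andP [hyd hyc].
    case: (leqP y a) => // hay; exfalso.
    by apply: (hA jc r j' y e ht hyc he) => //; rewrite etd.
  rewrite /place_below; case E: (actives k _) => [|a0 A]; first by rewrite E in haA.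
  rewrite -E.
  have hm : \max_(x <- actives k (restrict F d)) x = a.
    apply/eqP; rewrite eqn_leq le_max // andbT.
    by apply/bigmax_leqP_seq => y hy _; apply: hbound.
  rewrite hm (@find_eq _ _ _ jc (0, [::])).
  + by rewrite nth_restrict (set_restrict hjc) // -etd mem_nth.
  + by rewrite size_zip size_restrict minnn -HsF.
  + by rewrite nth_zip_restrict /is_active /= hs0 -col_size // hs1 hla eqxx.
  + move=> i hi; rewrite nth_zip_restrict /is_active /=; apply/negP => /andP [/andP [hi0 _] /eqP hl].
    have : a \in filter (fun x => x < d) (col i).
      by rewrite -hl; case: (filter _ _) hi0 => // z l _; rewrite (@mem_last _ z l).
    rewrite mem_filter => /andP [_ hai]; have := col_unique hai hac; lia.
Qed.

Lemma restrict_top : restrict F N.+1 = F.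
Proof.
rewrite /restrict -[RHS]map_id; apply/eq_in_map => c hc /=; apply/all_filterP/allP => x hx.
have : x \in flatten F by apply/flattenP; exists c.
by rewrite memF ltnS => /andP [].
Qed.

Lemma restrict1 : restrict F 1 = nseq (size k) [::].
Proof.
apply: (@eq_from_nth _ [::]); first by rewrite size_restrict size_nseq.
move=> i; rewrite size_restrict => hi; rewrite nth_restrict nth_nseq hi.
apply: filter_nil => y hy; have := col_flat hy; rewrite memF; lia.
Qed.

Lemma one_in_H : 0 < size k -> 1 \in H.
Proof.
move=> hk; have : 1 \in flatten F by rewrite memF; lia.
move/in_col => [j hj h1]; have hh := head_le (colS j) h1.
have : head 0 (col j) \in flatten F by apply: col_flat; apply: head_in.
rewrite memF => /andP [hh0 _].
have e : head 0 (col j) = 1 by lia.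
by rewrite -e; apply: map_f; apply: mem_nth.
Qed.

Lemma eta_ok : condA F -> eta k (map gl (iota 1 N)) = Some F.
Proof.
move=> hA; case: (posnP (size k)) => hk.
  have eF : F = [::] by apply/eqP; rewrite -size_eq0 HsF hk.
  have ek : k = [::] by apply/eqP; rewrite -size_eq0 hk.
  by rewrite eF ek.
have hr := @run_build k (map gl (iota 1 N)) 1 F.
rewrite restrict1 size_map size_iota add1n restrict_top in hr.
have {hr} hr : run k (map gl (iota 1 N)) 1 (nseq (size k) [::]) = Some F.
  apply: hr => d hd; rewrite (nth_map 0) ?size_iota; last by lia.
  rewrite nth_iota; last by lia.
  rewrite (_ : 1 + (d - 1) = d); last by lia.
  by apply: step_ok.
have eN : iota 1 N = 1 :: iota 2 N.-1.
  have hN : N = N.-1.+1 by lia.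
  by rewrite {1}hN.
move: hr; rewrite eN /= /gl one_in_H //.
Qed.


Lemma uniqH : uniq H.
Proof. exact: sorted_uniq ltn_trans ltnn _ Hhead. Qed.

Lemma sizeH : size H = size k.
Proof. by rewrite size_map HsF. Qed.

Lemma H_in x : x \in H -> x \in flatten F.
Proof.
move/(nthP 0) => [j]; rewrite size_map => hj <-; rewrite (nth_map [::]) //.
by apply: col_flat; apply: head_in.
Qed.

Lemma filter_iota_H : filter (mem H) (iota 1 N) = H.
Proof.
apply: (irr_sorted_eq ltn_trans ltnn).
- by apply: sorted_filter; [exact: ltn_trans | exact: iota_ltn_sorted].
- exact: Hhead.
- move=> x; rewrite mem_filter /=; case hx: (x \in H) => //=.
  by rewrite -(perm_mem Hperm); apply: H_in.
Qed.

Lemma pmap_gl (s : seq nat) : pmap id (map gl s) = map (index^~ H) (filter (mem H) s).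
Proof. by elim: s => //= x s IH; rewrite /gl; case: ifP => /= _; rewrite IH. Qed.

Lemma map_index_H : map (index^~ H) H = iota 0 (size k).
Proof.
apply: (@eq_from_nth _ 0); first by rewrite size_map size_iota sizeH.
move=> i; rewrite size_map sizeH => hi.
rewrite (nth_map 0) ?sizeH // nth_iota // index_uniq //; [by rewrite sizeH | exact: uniqH].
Qed.

Lemma sum_sel (L : seq (seq nat)) (x : nat) : uniq (map (head 0) L) ->
  \sum_(c <- L) (head 0 c == x) * size c =
  if x \in map (head 0) L then size (nth [::] L (index x (map (head 0) L))) else 0.
Proof.
elim: L => [|c L IH] /=; first by rewrite big_nil.
move=> /andP [hn hu]; rewrite big_cons IH // inE; case: (eqVneq (head 0 c) x) => [e|ne] /=.
  by rewrite -e (negbTE hn) mul1n addn0.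
by rewrite mul0n add0n.
Qed.

Definition sz (x : nat) := \sum_(c <- F) (head 0 c == x) * size c.

Lemma kstep_gl x : kstep k (gl x) = ((sz x)%:Z - 1)%R.
Proof.
rewrite /sz sum_sel ?uniqH // /gl; case: ifP => hx /=; last by lia.
have hj : index x H < size F by rewrite -(size_map (head 0)) index_mem.
rewrite col_size //; have -> : (k`_(index x H))%R = nth 0%N k (index x H) by []; lia.
Qed.

Lemma sum_pred1 (s : seq nat) h n : \sum_(x <- s) (h == x) * n = count (pred1 h) s * n.
Proof.
elim: s => [|x s IH] /=; first by rewrite big_nil.
by rewrite big_cons IH mulnDl eq_sym.
Qed.

Lemma count_le_iota i : i <= N -> count (fun y => y <= i) (iota 1 N) = i.
Proof.
move=> hi; rewrite (_ : N = i + (N - i)); last by lia.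
rewrite iotaD count_cat.
rewrite (@eq_in_count _ _ predT (iota 1 i)); last by move=> y; rewrite mem_iota /=; lia.
rewrite count_predT size_iota (@eq_in_count _ _ pred0); last by move=> y; rewrite mem_iota /=; lia.
by rewrite count_pred0 addn0.
Qed.

Lemma sz_sum i : i <= N -> i <= \sum_(x <- iota 1 i) sz x.
Proof.
move=> hi; rewrite /sz exchange_big /=.
apply: (@leq_trans (\sum_(c <- F) count (fun y => y <= i) c)).
  by rewrite -{1}(count_le_iota hi) -(permP Hperm) count_flatten sumnE big_map.
rewrite [X in X <= _]big_seq [X in _ <= X]big_seq; apply: leq_sum => c hc.
rewrite sum_pred1 count_uniq_mem ?iota_uniq //.
case hin: (head 0 c \in iota 1 i); first by rewrite mul1n count_size.
move: hc => /(nthP [::]) [j hj ec]; rewrite -ec in hin *.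
have : head 0 (col j) \in flatten F by apply: col_flat; apply: head_in.
rewrite memF mem_iota in hin * => /andP [h0 _].
rewrite (@eq_in_count _ _ pred0); first by rewrite count_pred0.
move=> y hy /=; have hh : i < head 0 (col j) by move: hin; rewrite h0 /= add1n ltnS => /negbT; rewrite -ltnNge.
apply/negbTE; rewrite -ltnNge; exact: leq_trans hh (head_le (colS j) hy).
Qed.

Lemma sum_int (s : seq nat) (f : nat -> nat) :
  (\sum_(x <- s) ((f x)%:Z - 1) = (\sum_(x <- s) f x)%:Z - (size s)%:Z)%R.
Proof.
elim: s => [|x s IH]; first by rewrite !big_nil.
rewrite !big_cons IH /=; lia.
Qed.

Lemma dyck_ok : dyck k (map gl (iota 1 N)).
Proof.
split.
- by rewrite pmap_gl filter_iota_H map_index_H.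
- rewrite count_map.
  rewrite (@eq_count _ _ (predC (mem H))); last by move=> x; rewrite /= /gl; case: ifP.
  have := count_predC (mem H) (iota 1 N).
  rewrite size_iota -size_filter filter_iota_H sizeH; lia.
- move=> i; rewrite size_map size_iota => hi.
  rewrite /rank -map_take take_iota big_map (_ : minn i N = i); last by lia.
  rewrite (eq_bigr (fun x => ((sz x)%:Z - 1)%R)); last by move=> x _; rewrite kstep_gl.
  rewrite sum_int size_iota; have := sz_sum (ltnW hi); lia.
Qed.

End Tab.

Theorem lemma3p10 (k : seq nat) (F : seq (seq nat)) :
  all (fun x => 0 < x) k ->
  is_tableau k F ->
  (exists p : seq letter, dyck k p /\ eta k p = Some F) <-> gap_condition F.
Proof.
move=> _ [HsF Hsz Hperm Hhead Hcol].
have hg := gap_condA HsF Hperm Hhead Hcol.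
rewrite hg; split.
- by move=> [p [_ he]]; apply: (eta_condA HsF Hsz Hcol he).
- move=> hA; exists (map (gl F) (iota 1 (sumn k + size k))); split.
    exact: (dyck_ok HsF Hsz Hperm Hhead Hcol).
  apply: (eta_ok HsF Hsz Hperm Hhead Hcol hA).
Qed.
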